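(* Let $p\le q$ be positive integers. The complete bipartite graph $K_{p,q}$ is a TRVG if and only if $p\le 2$ or $(p,q)\in\{(3,3),(3,4)\}$.
   Context: A graph $G$ is a transparent rectangle visibility graph (TRVG) if its vertices can be represented by a collection of pairwise non-overlapping rectangles in the plane whose sides are parallel to the coordinate axes, one per vertex, such that two distinct vertices are adjacent if and only if there is a horizontal or a vertical line intersecting the interiors of both of their rectangles (other rectangles do not block visibility). *)

(* Defs.v *)
From Stdlib Require Import Reals.
From mathcomp Require Import all_boot.
Set Implicit Arguments. Unset Strict Implicit. Unset Printing Implicit Defensive.

Local Open Scope R_scope.

Record rect := Rect { xl : R; xr : R; yl : R; yr : R }.

Definition rect_ok (a : rect) : Prop := xl a < xr a /\ yl a < yr a.

Definition in_interior (a : rect) (x y : R) : Prop :=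
  xl a < x < xr a /\ yl a < y < yr a.

Definition non_overlapping (a b : rect) : Prop :=
  ~ (exists x y, in_interior a x y /\ in_interior b x y).

Definition hvis (a b : rect) : Prop :=
  exists c, (exists x, in_interior a x c) /\ (exists x, in_interior b x c).

Definition vvis (a b : rect) : Prop :=
  exists c, (exists y, in_interior a c y) /\ (exists y, in_interior b c y).

Definition TRVG (V : finType) (E : rel V) : Prop :=
  exists r : V -> rect,
    (forall v, rect_ok (r v)) /\
    (forall u v, u <> v -> non_overlapping (r u) (r v)) /\
    (forall u v, u <> v -> (E u v <-> hvis (r u) (r v) \/ vvis (r u) (r v))).

Definition Kpq_rel (p q : nat) : rel ('I_p + 'I_q)%type :=
  fun u v => match u, v with
             | inl _, inr _ => true
             | inr _, inl _ => true
             | _, _ => false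
             end.
Arguments Kpq_rel : clear implicits.

(* Main.v *)
From Pilot Require Import Defs.
From Stdlib Require Import Reals.
From mathcomp Require Import all_boot.
From Stdlib Require Import Lra Classical.
From mathcomp Require Import zify.
Import Pilot.Defs.
Local Open Scope R_scope.

Definition rltb (a b : R) : bool := if Rlt_dec a b then true else false.
Lemma rltbP (a b : R) : reflect (a < b) (rltb a b).
Proof. rewrite /rltb; case: Rlt_dec => h; constructor; auto. Qed.

Lemma ex_max (T : finType) (h : T -> R) (t0 : T) :
  exists m, forall k, (h k <= h m).
Proof.
  have: forall s : seq T, exists m, forall k, k \in s -> (h k <= h m).
    elim=> [|x s [m Hm]]; first by exists t0.
    case: (Rle_dec (h x) (h m)) => hx.
      exists m => k; rewrite in_cons => /orP [/eqP ->|ks]; auto.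
    exists x => k; rewrite in_cons => /orP [/eqP ->|ks]; first lra.
    have := Hm k ks; lra.
  move=> /(_ (enum T)) [m Hm]; exists m => k; apply: Hm; by rewrite mem_enum.
Qed.

Lemma count_ov (I J : finType) (loI hiI : I -> R) (loJ hiJ : J -> R)
  (dI : forall i i', i <> i' -> (hiI i <= loI i' \/ hiI i' <= loI i))
  (dJ : forall j j', j <> j' -> (hiJ j <= loJ j' \/ hiJ j' <= loJ j))
  (z0 : (I + J)%type) :
  (#|[set x : I * J | rltb (loI x.1) (hiJ x.2) && rltb (loJ x.2) (hiI x.1)]|
    < #|I| + #|J|)%N.
Proof.
  set S := [set x : I * J | _].
  pose f (x : I * J) : (I + J)%type :=
    if Rle_dec (hiI x.1) (hiJ x.2) then inl x.1 else inr x.2.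
  have memS : forall x, x \in S -> (loI x.1 < hiJ x.2 /\ loJ x.2 < hiI x.1).
    by move=> x; rewrite inE => /andP [/rltbP ? /rltbP ?].
  have inj : {in S &, injective f}.
    move=> [i j] [i' j'] /memS /= [h1 h2] /memS /= [h3 h4].
    rewrite /f /=.
    case: Rle_dec => e1; case: Rle_dec => e2 // [E]; subst.
    - case: (eqVneq j j') => [->//|/eqP ne].
      case: (dJ _ _ ne) => ?; lra.
    - case: (eqVneq i i') => [->//|/eqP ne].
      case: (dI _ _ ne) => ?; lra.
  pose h (k : (I + J)%type) := match k with inl i => hiI i | inr j => hiJ j end.
  have [m Hm] := @ex_max _ h z0.
  have [z hz] : exists z, forall x, x \in S -> f x <> z.
    case: (classic (exists j, (h m <= hiJ j))) => [[j hj]|nj].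
      exists (inr j) => x _; rewrite /f; case: Rle_dec => // e [E]; subst.
      have := Hm (inl x.1); rewrite /=; lra.
    case: m Hm nj => [i|j] Hm nj; last first.
      by exfalso; apply: nj; exists j; simpl; lra.
    exists (inl i) => x _; rewrite /f; case: Rle_dec => // e [E]; subst.
    apply: nj; exists x.2; simpl; lra.
  have sub : f @: S \subset [set~ z].
    apply/subsetP => y /imsetP [x xS ->]; rewrite !inE; apply/eqP; exact: hz.
  have := subset_leq_card sub.
  rewrite card_in_imset // cardsC1 card_sum.
  have : (0 < #|{: (I + J)%type}|)%N by apply/card_gt0P; exists z0.
  rewrite card_sum. lia.
Qed.

Lemma midpt (a b c d : R) : a < d -> c < b -> a < b -> c < d ->
  exists x, a < x < b /\ c < x < d.
Proof.
  move=> h1 h2 h3 h4.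
  exists ((Rmax a c + Rmin b d) / 2).
  unfold Rmax, Rmin; case: Rle_dec; case: Rle_dec; intros; lra.
Qed.

Lemma hvisE (a b : rect) : rect_ok a -> rect_ok b ->
  (hvis a b <-> yl a < yr b /\ yl b < yr a).
Proof.
  case=> ha1 ha2 [hb1 hb2]; split.
  - case=> c [[x [_ h1]] [y [_ h2]]]; lra.
  - case=> h1 h2; have [c [hc1 hc2]] := @midpt _ _ _ _ h1 h2 ha2 hb2.
    exists c; split; [exists ((xl a + xr a)/2) | exists ((xl b + xr b)/2)];
      split; lra.
Qed.

Lemma vvisE (a b : rect) : rect_ok a -> rect_ok b ->
  (vvis a b <-> xl a < xr b /\ xl b < xr a).
Proof.
  case=> ha1 ha2 [hb1 hb2]; split.
  - case=> c [[x [h1 _]] [y [h2 _]]]; lra.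
  - case=> h1 h2; have [c [hc1 hc2]] := @midpt _ _ _ _ h1 h2 ha1 hb1.
    exists c; split; [exists ((yl a + yr a)/2) | exists ((yl b + yr b)/2)];
      split; lra.
Qed.

Lemma novE (a b : rect) :
  xr a <= xl b \/ xr b <= xl a \/ yr a <= yl b \/ yr b <= yl a ->
  non_overlapping a b.
Proof.
  move=> h [x [y [[[h1 h2] [h3 h4]] [[h5 h6] [h7 h8]]]]]; lra.
Qed.

Lemma disj_of (lo1 hi1 lo2 hi2 : R) : ~ (lo1 < hi2 /\ lo2 < hi1) ->
  hi1 <= lo2 \/ hi2 <= lo1.
Proof. move=> h; case: (Rle_or_lt hi1 lo2); first by left.
  case: (Rle_or_lt hi2 lo1); first by right. move=> *; exfalso; apply: h; lra. Qed.

Lemma necessity (p q : nat) : (0 < p)%N -> TRVG (Kpq_rel p q) ->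
  (p * q + 2 <= 2 * (p + q))%N.
Proof.
  move=> p0 [r [ok [_ adj]]].
  have z0 : ('I_p + 'I_q)%type by left; exact: Ordinal p0.
  have nadj : forall i i' : 'I_p, i <> i' ->
     ~ hvis (r (inl i)) (r (inl i')) /\ ~ vvis (r (inl i)) (r (inl i')).
    move=> i i' ne; have := adj (inl i) (inl i') (fun e => ne (f_equal (fun x => match x with inl k => k | inr _ => i end) e)).
    move=> [_ H]; split => h; [have := H (or_introl h) | have := H (or_intror h)]; done.
  have nadjB : forall j j' : 'I_q, j <> j' ->
     ~ hvis (r (inr j)) (r (inr j')) /\ ~ vvis (r (inr j)) (r (inr j')).
    move=> j j' ne; have := adj (inr j) (inr j') (fun e => ne (f_equal (fun x => match x with inr k => k | inl _ => j end) e)).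
    move=> [_ H]; split => h; [have := H (or_introl h) | have := H (or_intror h)]; done.
  have cX := @count_ov _ _ (fun i => xl (r (inl i))) (fun i => xr (r (inl i)))
     (fun j => xl (r (inr j))) (fun j => xr (r (inr j))) _ _ z0.
  have cY := @count_ov _ _ (fun i => yl (r (inl i))) (fun i => yr (r (inl i)))
     (fun j => yl (r (inr j))) (fun j => yr (r (inr j))) _ _ z0.
  rewrite !card_ord in cX cY.
  set SX := [set _ | _] in cX; set SY := [set _ | _] in cY.
  have cov : [set: 'I_p * 'I_q] \subset SX :|: SY.
    apply/subsetP => [[i j]] _; rewrite !inE /=.
    have := adj (inl i) (inr j) ltac:(discriminate).
    case=> H _; case: (H isT) => [/hvisE|/vvisE] h.
    - case: (h (ok _) (ok _)) => h1 h2.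
      by rewrite (introT (rltbP _ _) h1) (introT (rltbP _ _) h2) orbT.
    - case: (h (ok _) (ok _)) => h1 h2.
      by rewrite (introT (rltbP _ _) h1) (introT (rltbP _ _) h2).
  have := subset_leq_card cov.
  rewrite cardsT card_prod !card_ord => h.
  have := leq_card_setU SX SY.
  case=> h2 _.
  have hX := cX (fun i i' ne => @disj_of _ _ _ _ (fun hh => (nadj i i' ne).2 (proj2 (vvisE _ _ (ok _) (ok _)) hh)))
              (fun j j' ne => @disj_of _ _ _ _ (fun hh => (nadjB j j' ne).2 (proj2 (vvisE _ _ (ok _) (ok _)) hh))).
  have hY := cY (fun i i' ne => @disj_of _ _ _ _ (fun hh => (nadj i i' ne).1 (proj2 (hvisE _ _ (ok _) (ok _)) hh)))
              (fun j j' ne => @disj_of _ _ _ _ (fun hh => (nadjB j j' ne).1 (proj2 (hvisE _ _ (ok _) (ok _)) hh))).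
  move: hX hY h h2; set a := #|SX|; set b := #|SY|; set c := #|_ :|: _|. generalize (p * q)%N => pq. lia.
Qed.

Lemma goodpair (a b : rect) (E : bool) : rect_ok a -> rect_ok b ->
  (E = true -> (yl a < yr b /\ yl b < yr a) \/ (xl a < xr b /\ xl b < xr a)) ->
  (E = false -> ~ (yl a < yr b /\ yl b < yr a) /\ ~ (xl a < xr b /\ xl b < xr a)) ->
  (E <-> hvis a b \/ vvis a b).
Proof.
  move=> oa ob h1 h2.
  have e1 := hvisE _ _ oa ob; have e2 := vvisE _ _ oa ob.
  case: E h1 h2 => h1 h2; split => //.
  - by case: (h1 erefl) => h; [left; apply/e1 | right; apply/e2].
  - by case=> [/e1|/e2]; case: (h2 erefl).
Qed.

Lemma INR_lt (j q : nat) : (j < q)%N -> INR j + 1 <= INR q.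
Proof. move=> h; rewrite -S_INR; apply: le_INR; apply/leP; exact h. Qed.

Lemma INR_ne (j j' : nat) : j <> j' -> INR j + 1 <= INR j' \/ INR j' + 1 <= INR j.
Proof.
  move=> ne; case: (ltngtP j j') => h.
  - by left; apply: INR_lt.
  - by right; apply: INR_lt.
  - by subst.
Qed.

Definition rep2 (q : nat) (v : ('I_2 + 'I_q)%type) : rect :=
  match v with
  | inl i => if nat_of_ord i == 0%N then Rect 0 (INR q) 0 1
             else Rect (INR q) (INR q + 1) 1 (INR q + 1)
  | inr j => Rect (INR j) (INR j + 1) (INR j + 1) (INR j + 2)
  end.

Lemma suff2 (p q : nat) : (0 < p)%N -> (p <= 2)%N -> (p <= q)%N -> TRVG (Kpq_rel p q).
Proof.
  move=> p0 p2 pq.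
  have hq : 1 <= INR q by change 1 with (INR 1); apply: le_INR; apply/leP; lia.
  pose emb (v : ('I_p + 'I_q)%type) : ('I_2 + 'I_q)%type :=
    match v with inl i => inl (widen_ord p2 i) | inr j => inr j end.
  exists (fun v => rep2 q (emb v)).
  have ok : forall v, rect_ok (rep2 q (emb v)).
    case=> [[i hi]|[j hj]]; rewrite /rect_ok /=; last by split; lra.
    by case: (i == 0%N); simpl; split; lra.
  split; first exact ok.
  have HJ := pos_INR.
  split.
  - move=> [[i hi]|[j hj]] [[i' hi']|[j' hj']] ne; apply: novE => /=.
    + have {}ne : i <> i'.
        by move=> e; subst; apply: ne; congr inl; apply: val_inj.
      case: i hi ne => [|[|i]] hi ne; case: i' hi' ne => [|[|i']] hi' ne //=; try lia; lra.
    + have := @INR_lt _ _ hj'; have := HJ j'; case: i hi ne => [|[|i]] hi ne //=; try lia; lra.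
    + have := @INR_lt _ _ hj; have := HJ j; case: i' hi' ne => [|[|i']] hi' ne //=; try lia; lra.
    + have {}ne : j <> j'.
        by move=> e; subst; apply: ne; congr inr; apply: val_inj.
      have := @INR_ne _ _ ne; have := HJ j; have := HJ j'; simpl; lra.
  - move=> [[i hi]|[j hj]] [[i' hi']|[j' hj']] ne.
    + have {}ne : i <> i'.
        by move=> e; subst; apply: ne; congr inl; apply: val_inj.
      case: i hi ne => [|[|i]] hi ne; case: i' hi' ne => [|[|i']] hi' ne; try lia;
      apply: goodpair; try exact: ok; move=> //= _; lra.
    + have := @INR_lt _ _ hj'; have := HJ j'; case: i hi ne => [|[|i]] hi ne; try lia;
      move=> *; apply: goodpair; try exact: ok; move=> //= _; lra.
    + have := @INR_lt _ _ hj; have := HJ j; case: i' hi' ne => [|[|i']] hi' ne; try lia;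
      move=> *; apply: goodpair; try exact: ok; move=> //= _; lra.
    + have {}ne : j <> j'.
        by move=> e; subst; apply: ne; congr inr; apply: val_inj.
      have := @INR_ne _ _ ne; have := HJ j; have := HJ j'; move=> *;
      apply: goodpair; try exact: ok; move=> //= _; lra.
Qed.

Definition rep3 (q : nat) (v : ('I_3 + 'I_q)%type) : rect :=
  match v with
  | inl i => match nat_of_ord i with
             | 0%N => Rect 0 1 1 4 | 1%N => Rect 1 4 0 1 | _ => Rect 4 6 4 6 end
  | inr j => match nat_of_ord j with
             | 0%N => Rect 0 2 5 6 | 1%N => Rect 2 3 3 5
             | 2%N => Rect 3 5 2 3 | _ => Rect 5 6 0 2 end
  end.

Lemma suff3 (q : nat) : (q <= 4)%N -> TRVG (Kpq_rel 3 q).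
Proof.
  move=> q4.
  exists (rep3 q).
  have ok : forall v, rect_ok (rep3 q v).
    case=> [[i hi]|[j hj]]; rewrite /rect_ok /=.
    - by case: i hi => [|[|i]] hi /=; split; lra.
    - by case: j hj => [|[|[|j]]] hj /=; split; lra.
  split; first exact ok.
  split.
  - move=> [[i hi]|[j hj]] [[i' hi']|[j' hj']] ne; apply: novE => /=.
    + have {}ne : i <> i'.
        by move=> e; subst; apply: ne; congr inl; apply: val_inj.
      case: i hi ne => [|[|[|i]]] hi ne; case: i' hi' ne => [|[|[|i']]] hi' ne //=; try lia; lra.
    + case: i hi ne => [|[|[|i]]] hi ne; case: j' hj' ne => [|[|[|[|j']]]] hj' ne //=; try lia; lra.
    + case: i' hi' ne => [|[|[|i']]] hi' ne; case: j hj ne => [|[|[|[|j]]]] hj ne //=; try lia; lra.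
    + have {}ne : j <> j'.
        by move=> e; subst; apply: ne; congr inr; apply: val_inj.
      case: j hj ne => [|[|[|[|j]]]] hj ne; case: j' hj' ne => [|[|[|[|j']]]] hj' ne //=; try lia; lra.
  - move=> [[i hi]|[j hj]] [[i' hi']|[j' hj']] ne.
    + have {}ne : i <> i'.
        by move=> e; subst; apply: ne; congr inl; apply: val_inj.
      case: i hi ne => [|[|[|i]]] hi ne; case: i' hi' ne => [|[|[|i']]] hi' ne; try lia;
      apply: goodpair; try exact: ok; move=> //= _; lra.
    + case: i hi ne => [|[|[|i]]] hi ne; case: j' hj' ne => [|[|[|[|j']]]] hj' ne; try lia;
      apply: goodpair; try exact: ok; move=> //= _; lra.
    + case: i' hi' ne => [|[|[|i']]] hi' ne; case: j hj ne => [|[|[|[|j]]]] hj ne; try lia;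
      apply: goodpair; try exact: ok; move=> //= _; lra.
    + have {}ne : j <> j'.
        by move=> e; subst; apply: ne; congr inr; apply: val_inj.
      case: j hj ne => [|[|[|[|j]]]] hj ne; case: j' hj' ne => [|[|[|[|j']]]] hj' ne; try lia;
      apply: goodpair; try exact: ok; move=> //= _; lra.
Qed.

Local Close Scope R_scope.

Theorem theorem3 (p q : nat) :
  0 < p -> p <= q ->
  (TRVG (Kpq_rel p q) <->
   (p <= 2 \/ (p = 3 /\ q = 3) \/ (p = 3 /\ q = 4))).
Proof.
  move=> p0 pq; split.
  - move=> T; have := @necessity _ _ p0 T => h.
    case: (leqP p 2) => hp; first by left.
    right.
    have e3 : p = 3 by nia.
    subst p.
    have : q <= 4 by lia.
    have : 3 <= q by [].
    lia.
  - case=> [h|[[-> ->]|[-> ->]]].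
    + exact: suff2.
    + exact: suff3.
    + exact: suff3.
Qed.
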